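(* For $m,n\in \mathbb{Z}_{>1}$, \begin{align*} \zeta(m,n)=P(m,n), \end{align*} where \begin{align*} P(m,n):=&\sum^{m-1}_{i=0}(-1)^{i}\binom{n+i-1}{i}\zeta(n+i)\zeta_{\sqcup\!\sqcup}(m-i)\\ &\ +(-1)^{m}\sum^{n-1}_{j=0}\binom{m+j-1}{j}\Bigl\{\zeta(m+j)\zeta_{\sqcup\!\sqcup}(n-j)-\zeta^{\star}(n-j,m+j)\Bigr\}. \end{align*}
   Context: For $n\in\mathbb{Z}_{>0}$, $m\in\mathbb{Z}_{>1}$: $\zeta(m)=\sum_{k\ge1}k^{-m}$, the double zeta value $\zeta(n,m)=\sum_{0<k_1<k_2}k_1^{-n}k_2^{-m}$, and the double zeta star value $\zeta^\star(n,m)=\sum_{0<k_1\le k_2}k_1^{-n}k_2^{-m}=\zeta(n,m)+\zeta(m+n)$. The shuffle regularized values $\zeta_{\sqcup\!\sqcup}(m)\in\mathbb{R}[T]$ (for $m\in\mathbb{Z}_{>0}$) are defined as follows: as $\epsilon\to0$, $\sum_{k>0}(1-\epsilon)^k/k^m\sim c_0+c_1(-\log\epsilon)$ with $c_i\in\mathbb{R}$, and $\zeta_{\sqcup\!\sqcup}(m):=c_0+c_1T$. In particular $\zeta_{\sqcup\!\sqcup}(1)=T$ and $\zeta_{\sqcup\!\sqcup}(m)=\zeta(m)$ for $m>1$. The identity is an equality in $\mathbb{R}[T]$ (the $T$-terms cancel). *)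

(* Defs.v *)
From HB Require Import structures.
From mathcomp Require Import all_boot all_order all_algebra.
From mathcomp Require Import all_classical all_reals all_analysis.
Set Implicit Arguments. Unset Strict Implicit. Unset Printing Implicit Defensive.
Import Order.TTheory GRing.Theory Num.Theory.
Local Open Scope ring_scope.

Definition zeta (R : realType) (m : nat) : R :=
  limn (fun N : nat => \sum_(1 <= k < N) (k%:R : R) ^- m).

Definition zeta2 (R : realType) (n m : nat) : R :=
  limn (fun N : nat => \sum_(1 <= k2 < N)
          ((\sum_(1 <= k1 < k2) (k1%:R : R) ^- n) * (k2%:R : R) ^- m)).

Definition zeta2_star (R : realType) (n m : nat) : R :=
  limn (fun N : nat => \sum_(1 <= k2 < N)
          ((\sum_(1 <= k1 < k2.+1) (k1%:R : R) ^- n) * (k2%:R : R) ^- m)).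

(* Shuffle-regularized zeta value in R[T] (T = 'X), for m >= 1:
   zeta_sh(1) = T and zeta_sh(m) = zeta(m) for m > 1. *)
Definition zeta_sh (R : realType) (m : nat) : {poly R} :=
  if m == 1%N then 'X else (zeta R m)%:P.

(* Main.v *)
Require Import Defs.
From HB Require Import structures.
From mathcomp Require Import all_boot all_order all_algebra.
From mathcomp Require Import all_classical all_reals all_analysis.
From mathcomp Require Import ring lra zify.
Import Order.TTheory GRing.Theory Num.Theory.
Local Open Scope ring_scope.
Import numFieldNormedType.Exports.

Definition cb (F : comNzRingType) (n i : nat) : F := ('C(n + i - 1, i))%:R.

Lemma cb_pascal (F : comNzRingType) n i :
  cb F n.+1 i.+1 = cb F n i.+1 + cb F n.+1 i.
Proof.
rewrite /cb -natrD; congr (_%:R).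
have -> : (n.+1 + i.+1 - 1 = (n + i).+1)%N by lia.
have -> : (n + i.+1 - 1 = n + i)%N by lia.
have -> : (n.+1 + i - 1 = n + i)%N by lia.
by rewrite binS.
Qed.

Lemma cb0 (F : comNzRingType) n : cb F n 0 = 1.
Proof. by rewrite /cb bin0. Qed.

Lemma cb0S (F : comNzRingType) i : cb F 0 i.+1 = 0.
Proof. by rewrite /cb add0n subn1 /= bin_small. Qed.

Definition pfA {F : comNzRingType} (u w : F) m n :=
  \sum_(i < m) (-1) ^+ i * cb F n i * u ^+ (m - i) * w ^+ (n + i).
Definition pfB {F : comNzRingType} (v w : F) m n :=
  \sum_(j < n) cb F m j * v ^+ (n - j) * w ^+ (m + j).

Lemma pfA_rec (F : comNzRingType) (u w : F) m n :
  w * (pfA u w m.+1 n - pfA u w m n.+1) = pfA u w m.+1 n.+1.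
Proof.
rewrite /pfA big_ord_recl [in RHS]big_ord_recl /= !cb0.
rewrite mulrBr mulrDr mulr_sumr -addrA; congr (_ + _).
  by rewrite !subn0 !addn0 !expr0 !mul1r !exprS; ring.
rewrite mulr_sumr -sumrB; apply: eq_bigr => i _.
rewrite /bump /= !add1n !subSS cb_pascal.
have -> : (n + i.+1 = (n + i).+1)%N by lia.
have -> : (n.+1 + i.+1 = (n + i).+2)%N by lia.
have -> : (n.+1 + i = (n + i).+1)%N by lia.
rewrite !exprS; ring.
Qed.

Lemma pfB_rec (F : comNzRingType) (v w : F) m n :
  w * (pfB v w m.+1 n + pfB v w m n.+1) = pfB v w m.+1 n.+1.
Proof.
rewrite /pfB [in X in _ + X]big_ord_recl [in RHS]big_ord_recl /= !cb0.
rewrite mulrDr mulrDr addrCA; congr (_ + _).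
  by rewrite !subn0 !addn0 !mul1r !exprS; ring.
rewrite !mulr_sumr -big_split; apply: eq_bigr => i _.
rewrite /bump /= !add1n !subSS cb_pascal.
have -> : (m + i.+1 = (m + i).+1)%N by lia.
have -> : (m.+1 + i.+1 = (m + i).+2)%N by lia.
have -> : (m.+1 + i = (m + i).+1)%N by lia.
rewrite !exprS; ring.
Qed.

Lemma pf_ident (F : comNzRingType) (u v w : F) :
  u * v = w * (u - v) -> forall m n, (0 < m + n)%N ->
  u ^+ m * v ^+ n = pfA u w m n + (-1) ^+ m * pfB v w m n.
Proof.
move=> huv; elim/ltn_ind=> m IHm n; elim: n m IHm => [|n IHn] [|m] IHm //= _.
- rewrite /pfB big_ord0 mulr0 addr0 expr0 mulr1 /pfA big_ord_recl /= cb0 subn0 addn0 expr0 mulr1 mul1r.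
  rewrite big1 ?addr0 ?mul1r // => i _; rewrite /bump /= add1n cb0S.
  by rewrite !mulr0 !mul0r.
- rewrite /pfA big_ord0 add0r expr0 mul1r mul1r /pfB big_ord_recl /= cb0 subn0 addn0 expr0 mulr1 mul1r.
  rewrite big1 ?addr0 ?mul1r // => i _; rewrite /bump /= add1n cb0S.
  by rewrite !mul0r.
- have e : u ^+ m.+1 * v ^+ n.+1 = w * (u ^+ m.+1 * v ^+ n - u ^+ m * v ^+ n.+1).
    by rewrite !exprS; ring: huv.
  have h1 := IHn m.+1 IHm isT.
  have h2 := IHm m (ltnSn m) n.+1 ltac:(by rewrite addnS).
  rewrite e h1 h2.
  rewrite -pfA_rec -pfB_rec exprS. ring.
Qed.


Definition ps {R : realType} (a N : nat) : R := \sum_(1 <= k < N) (k%:R : R) ^- a.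
Definition z2s {R : realType} (a b N : nat) : R := \sum_(1 <= l < N) (ps a l * (l%:R : R) ^- b).
Definition zss {R : realType} (b a N : nat) : R := \sum_(1 <= l < N) (ps b l.+1 * (l%:R : R) ^- a).
Definition tri {R : realType} (a b N : nat) : R :=
  \sum_(1 <= l < N) \sum_(1 <= k < l) ((k%:R : R) ^- a * ((l - k)%:R : R) ^- b).

Lemma sum_refl {R : realType} (f : nat -> R) l :
  \sum_(1 <= k < l) f (l - k)%N = \sum_(1 <= k < l) f k.
Proof.
rewrite big_nat_rev; apply: eq_big_nat => k hk; congr f; lia.
Qed.

Lemma fin_ident {R : realType} m n N : (0 < m + n)%N ->
  z2s (R:=R) m n N = \sum_(i < m) (-1) ^+ i * cb R n i * tri (m - i) (n + i) N
     + (-1) ^+ m * \sum_(j < n) cb R m j * z2s (m + j) (n - j) N.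
Proof.
move=> hmn.
rewrite /tri /z2s.
under [in RHS]eq_bigr do rewrite mulr_sumr.
under [in X in _ * X]eq_bigr do rewrite mulr_sumr.
rewrite [X in X + _]exchange_big [X in _ * X]exchange_big mulr_sumr -big_split /=.
apply: eq_big_nat => l hl.
rewrite {1}/ps mulr_suml.
under [in RHS]eq_bigr do rewrite mulr_sumr.
under [in X in _ * X]eq_bigr do rewrite /ps -sum_refl mulr_suml mulr_sumr.
rewrite [X in X + _]exchange_big [X in _ * X]exchange_big mulr_sumr -big_split /=.
apply: eq_big_nat => k hk.
have hk0 : (k%:R : R) != 0 by rewrite pnatr_eq0; lia.
have hl0 : (l%:R : R) != 0 by rewrite pnatr_eq0; lia.
have hd0 : ((l - k)%:R : R) != 0 by rewrite pnatr_eq0; lia.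
have huv : (k%:R : R)^-1 * (l%:R)^-1 = ((l - k)%:R)^-1 * ((k%:R)^-1 - (l%:R)^-1).
  move: hd0; rewrite natrB; last by lia.
  move=> hd0; field. by apply/and3P.

rewrite -!exprVn (pf_ident _ _ _ _ huv m n hmn) /pfA /pfB mulr_sumr.
congr (_ + _); first by apply: eq_bigr => i _; rewrite !exprVn; ring.
rewrite mulr_sumr; apply: eq_bigr => i _; rewrite !exprVn; ring.
Qed.


Lemma sum1S {R : realType} (f : nat -> R) N : (0 < N)%N ->
  \sum_(1 <= k < N.+1) f k = \sum_(1 <= k < N) f k + f N.
Proof. by move=> h; rewrite big_nat_recr. Qed.

Lemma sum1_small {R : realType} (f : nat -> R) N : (N <= 1)%N ->
  \sum_(1 <= k < N) f k = 0.
Proof. by move=> h; rewrite big_geq. Qed.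

Lemma square_ident {R : realType} a b N :
  z2s (R:=R) a b N + zss b a N = ps a N * ps b N.
Proof.
elim: N => [|N IH]; first by rewrite /z2s /zss /ps !sum1_small // mul0r addr0.
have [->|hN] := eqVneq N 0%N; first by rewrite /z2s /zss /ps !sum1_small // mul0r addr0.
have hN' : (0 < N)%N by lia.
rewrite /z2s /zss /ps !sum1S //.
rewrite /z2s /zss /ps in IH.
set A := \sum_(1 <= k < N) _ in IH *.
set B := \sum_(1 <= k < N) _ in IH *.
set C := \sum_(1 <= k < N) _ in IH *.
set D := \sum_(1 <= k < N) _ in IH *.
have -> : A = C * D - B by rewrite -IH; ring.
ring.
Qed.


Lemma inv2_le {R : realType} (x : R) : 1 <= x ->
  (x ^+ 2)^-1 <= 2 * (x^-1 - (x + 1)^-1).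
Proof.
move=> hx.
have hx0 : x != 0 by rewrite gt_eqF // (lt_le_trans ltr01).
have hx1 : x + 1 != 0 by rewrite gt_eqF // ltr_wpDl // ?(le_trans ler01).
have -> : 2 * (x^-1 - (x + 1)^-1) = ((x * (x + 1)) / 2)^-1 by field; apply/andP.
rewrite lef_pV2 ?posrE; [nra| nra | nra].
Qed.

Lemma tel1 {R : realType} p q : (p <= q)%N ->
  \sum_(p <= d < q) ((d%:R : R)^-1 - (d.+1%:R)^-1) = (p%:R)^-1 - (q%:R)^-1.
Proof.
move=> hpq.
rewrite (telescope_sumr_eq (fun d => - (d%:R : R)^-1)) //; first by rewrite opprK addrC.
by move=> k _; rewrite opprK addrC.
Qed.

Lemma natinv_pos {R : realType} k : (0 < k)%N -> 0 < (k%:R : R)^-1.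
Proof. by move=> h; rewrite invr_gt0 ltr0n. Qed.

Lemma natinv_le1 {R : realType} k : (0 < k)%N -> (k%:R : R)^-1 <= 1.
Proof. by move=> h; rewrite invf_le1 ?ler1n ?ltr0n. Qed.

Lemma natpow_mono {R : realType} k a b : (0 < k)%N -> (b <= a)%N ->
  (k%:R : R) ^- a <= (k%:R) ^- b.
Proof.
move=> hk hab; rewrite -!exprVn; apply: ler_wiXn2l => //.
  exact: natinv_le1.
Qed.

Lemma ps2_le {R : realType} N : ps (R:=R) 2 N <= 2.
Proof.
case: N => [|N]; first by rewrite /ps big_geq.
apply: (le_trans (y := 2 * \sum_(1 <= d < N.+1) ((d%:R : R)^-1 - (d.+1%:R)^-1))).
- rewrite mulr_sumr; apply: ler_sum_nat => d hd; rewrite -[d.+1]addn1 natrD; apply: inv2_le; rewrite ler1n; lia.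
- rewrite tel1 // invr1; have := natinv_pos (R:=R) N.+1 isT; set x := (_^-1); lra.
Qed.


Lemma tri_rec {R : realType} a b N :
  tri (R:=R) a b N = \sum_(1 <= k < N) (k%:R : R) ^- a * ps b (N - k).
Proof.
elim: N => [|N IH]; first by rewrite /tri !sum1_small.
have [->|hN] := eqVneq N 0%N; first by rewrite /tri !sum1_small.
have hN' : (0 < N)%N by lia.
rewrite /tri sum1S // -/(tri a b N) IH sum1S // subSnn.
rewrite [ps b 1]/ps (sum1_small _ 1) // mulr0 addr0 -big_split /=.
apply: eq_big_nat => k hk; rewrite subSn; last by lia.
rewrite /ps sum1S; last by lia.
by rewrite mulrDr.
Qed.

Lemma err_formula {R : realType} a b N :
  ps (R:=R) a N * ps b N - tri a b N =
  \sum_(1 <= k < N) (k%:R : R) ^- a * \sum_(N - k <= d < N) (d%:R : R) ^- b.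
Proof.
rewrite tri_rec {1}/ps mulr_suml -sumrB; apply: eq_big_nat => k hk.
rewrite -mulrBr; congr (_ * _).
rewrite /ps (big_cat_nat _ (n := N - k)) /=; [by rewrite addrC addrK | lia | lia].
Qed.

Lemma natpow_ge0 {R : realType} k a : 0 <= (k%:R : R) ^- a.
Proof. by rewrite invr_ge0 exprn_ge0 // ler0n. Qed.

Lemma natinv_ge0 {R : realType} k : 0 <= (k%:R : R)^-1.
Proof. by rewrite invr_ge0 ler0n. Qed.

Lemma key_pt {R : realType} (x y : R) : 1 <= x -> 1 <= y ->
  ((x ^+ 2)^-1 + x^-1 * y^-1) * (2 * (y^-1 - (x + y)^-1)) <=
  2 / (x + y) * ((x ^+ 2)^-1 + 2 * (y ^+ 2)^-1).
Proof.
move=> hx hy.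
have hx0 : x != 0 by rewrite gt_eqF // (lt_le_trans ltr01).
have hy0 : y != 0 by rewrite gt_eqF // (lt_le_trans ltr01).
have hxy0 : x + y != 0 by rewrite gt_eqF //; lra.
have -> : ((x ^+ 2)^-1 + x^-1 * y^-1) * (2 * (y^-1 - (x + y)^-1)) =
   2 / (x + y) * (x^-1 * y^-1 + (y ^+ 2)^-1) by field; apply/and3P.
apply: ler_wpM2l.
  by rewrite divr_ge0 //; lra.
rewrite -!exprVn.
have : 0 < x^-1 by rewrite invr_gt0; lra.
have : 0 < y^-1 by rewrite invr_gt0; lra.
set p := x^-1; set q := y^-1 => hq hp.
nra.
Qed.

Lemma pt_bound {R : realType} a b N k d : (1 <= a)%N -> (2 <= b)%N -> (4 <= a + b)%N ->
  (0 < k < N)%N -> (N - k <= d < N)%N ->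
  (k%:R : R) ^- a * (d%:R : R) ^- b <=
  ((k%:R : R) ^- 2 + (k%:R)^-1 * ((N - k)%:R)^-1) * (2 * ((d%:R)^-1 - (d.+1%:R)^-1)).
Proof.
move=> ha hb hab hk hd.
have hd1 : (1 <= d)%N by lia.
apply: (le_trans (y := ((k%:R : R) ^- 2 + (k%:R)^-1 * ((N - k)%:R)^-1) * (d%:R : R) ^- 2)).
  have [ha2|ha1] := leqP 2 a.
    apply: (le_trans (y := (k%:R : R) ^- 2 * (d%:R : R) ^- 2)).
      apply: ler_pM; [ exact: natpow_ge0 | exact: natpow_ge0
                     | apply: natpow_mono; lia | apply: natpow_mono; lia].
    apply: ler_wpM2r; first exact: natpow_ge0.
    by rewrite lerDl mulr_ge0 // natinv_ge0.
  have -> : a = 1%N by lia.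
  apply: (le_trans (y := (k%:R : R)^-1 * (((N - k)%:R)^-1 * (d%:R : R) ^- 2))).
    rewrite expr1; apply: ler_wpM2l; first exact: natinv_ge0.
    apply: (le_trans (y := (d%:R : R) ^- 3)); first by apply: natpow_mono; lia.
    rewrite exprS invfM; apply: ler_wpM2r; first exact: natpow_ge0.
    rewrite lef_pV2 ?posrE ?ltr0n ?ler_nat //; lia.
  rewrite mulrA; apply: ler_wpM2r; first exact: natpow_ge0.
  by rewrite lerDr natpow_ge0.
apply: ler_wpM2l.
  by rewrite addr_ge0 ?mulr_ge0 ?natpow_ge0 ?natinv_ge0.
rewrite -[d.+1]addn1 natrD; apply: inv2_le; rewrite ler1n; lia.
Qed.

Lemma err_bound {R : realType} a b N : (1 <= a)%N -> (2 <= b)%N -> (4 <= a + b)%N ->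
  (0 < N)%N -> 0 <= ps (R:=R) a N * ps b N - tri a b N <= 12 / N%:R.
Proof.
move=> ha hb hab hN; rewrite err_formula; apply/andP; split.
  apply: sumr_ge0 => k _; apply: mulr_ge0; first exact: natpow_ge0.
  by apply: sumr_ge0 => d _; exact: natpow_ge0.
apply: (le_trans (y := \sum_(1 <= k < N) (((k%:R : R) ^- 2 + (k%:R)^-1 * ((N - k)%:R)^-1)
            * (2 * (((N - k)%:R)^-1 - (N%:R)^-1))))).
  apply: ler_sum_nat => k hk.
  rewrite -tel1; last by lia.
  rewrite mulr_sumr mulr_sumr mulr_sumr; apply: ler_sum_nat => d hd.
  exact: pt_bound.
apply: (le_trans (y := \sum_(1 <= k < N) (2 / N%:R * ((k%:R : R) ^- 2 + 2 * ((N - k)%:R) ^- 2)))).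
  apply: ler_sum_nat => k hk.
  have eN : (N%:R : R) = k%:R + (N - k)%:R by rewrite -natrD; congr (_%:R); lia.
  rewrite eN; apply: key_pt; rewrite ler1n; lia.
rewrite -mulr_sumr big_split /= -mulr_sumr.
rewrite (sum_refl (fun j => (j%:R : R) ^- 2) N) -/(ps 2 N).
have hP := ps2_le (R:=R) N.
have hP0 : 0 <= ps (R:=R) 2 N by apply: sumr_ge0 => k _; exact: natpow_ge0.
have hz : 0 < (N%:R : R)^-1 by exact: natinv_pos.
move: hP hP0 hz; set z := (N%:R : R)^-1; set P := ps 2 N.
move=> hP hP0 hz; nra.
Qed.


Lemma ps_mono_exp {R : realType} b N : (2 <= b)%N -> ps (R:=R) b N <= ps 2 N.
Proof. move=> hb; apply: ler_sum_nat => k hk; apply: natpow_mono; lia. Qed.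

Lemma ps1_le {R : realType} l : ps (R:=R) 1 l.+1 <= l%:R.
Proof.
rewrite /ps; apply: (le_trans (y := \sum_(1 <= k < l.+1) (1 : R))).
- apply: ler_sum_nat => k hk; rewrite expr1; apply: natinv_le1; lia.
- by rewrite sumr_const_nat subn1 /=.
Qed.

Lemma cvg_pos_series {R : realType} (f : nat -> R) c :
  (forall k, (0 < k)%N -> 0 <= f k <= c * (k%:R : R) ^- 2) ->
  cvgn (fun N => \sum_(1 <= k < N) f k).
Proof.
move=> hf; apply: nondecreasing_is_cvgn.
  apply/nondecreasing_seqP => N.
  case: N => [|N]; first by rewrite !sum1_small.
  by rewrite [X in _ <= X]sum1S // lerDl; case/andP: (hf N.+1 isT).
have hc : 0 <= c.
  have /andP[h1 h2] := hf 1%N isT; move: h2; rewrite expr1n invr1 mulr1 => h2.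
  exact: le_trans h1 h2.
exists (c * 2) => _ [N _ <-].
apply: (le_trans (y := c * ps 2 N)).
  rewrite /ps mulr_sumr; apply: ler_sum_nat => k hk; have /andP[_ ->] // := hf k ltac:(lia).
by apply: ler_wpM2l => //; exact: ps2_le.
Qed.

Lemma cvg_ps {R : realType} a : (2 <= a)%N -> cvgn (ps (R:=R) a).
Proof.
move=> ha; apply: (cvg_pos_series _ 1) => k hk.
by rewrite natpow_ge0 mul1r /=; apply: natpow_mono.
Qed.

Lemma ps_ge0 {R : realType} b N : 0 <= ps (R:=R) b N.
Proof. by apply: sumr_ge0 => k _; exact: natpow_ge0. Qed.

Lemma cvg_zss {R : realType} b a :
  (2 <= b)%N && (2 <= a)%N || (b == 1%N) && (3 <= a)%N -> cvgn (zss (R:=R) b a).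
Proof.
move=> hba; apply: (cvg_pos_series _ 2) => l hl.
rewrite mulr_ge0 ?ps_ge0 ?natpow_ge0 //=.
case/orP: hba => /andP[hb ha].
  apply: ler_pM; [exact: ps_ge0 | exact: natpow_ge0 | | by apply: natpow_mono].
  exact: le_trans (ps_mono_exp _ _ hb) (ps2_le _).
move/eqP: hb => ->.
apply: (le_trans (y := l%:R * (l%:R ^- 3))).
  apply: ler_pM; [exact: ps_ge0 | exact: natpow_ge0 | exact: ps1_le | by apply: natpow_mono].
have hl0 : (l%:R : R) != 0 by rewrite pnatr_eq0; lia.
rewrite exprS invfM mulrA mulfV // mul1r ler_peMl ?natpow_ge0 //; lra.
Qed.

Lemma cvg_err {R : realType} a b : (1 <= a)%N -> (2 <= b)%N -> (4 <= a + b)%N ->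
  ((fun N => ps (R:=R) a N * ps b N - tri a b N) @ \oo --> 0)%classic.
Proof.
move=> ha hb hab.
apply: (@squeeze_cvgr _ _ _ _ (cst 0) (fun N => 24 * harmonic N)).
- exists 1%N => // N /= hN.
  have /andP[h1 h2] := err_bound (R:=R) a b N ha hb hab hN; rewrite h1 /=.
  apply: le_trans h2 _.
  have hN0 : (0 < (N%:R : R)) by rewrite ltr0n.
  have hN1 : (1 : R) <= N%:R by rewrite ler1n.
  rewrite -natr1 ler_pdivrMr // mulrAC ler_pdivlMr; last by lra.
  lra.
- by apply: cvg_cst.
- by rewrite -(mulr0 24); apply: cvgMl_tmp; exact: (@cvg_harmonic R).
Qed.


Lemma cvg_sum_ord {R : realType} k (F : 'I_k -> nat -> R) (a : 'I_k -> R) :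
  (forall i, (F i @ \oo --> a i)%classic) ->
  ((fun N => \sum_(i < k) F i N) @ \oo --> \sum_(i < k) a i)%classic.
Proof.
move=> h; apply: (@cvg_big _ _ +%R 0 predT) => //.
exact: add_continuous.
Qed.

Lemma seq_ident {R : realType} m1 n1 N : (0 < m1)%N -> (0 < n1)%N ->
  z2s (R:=R) m1.+1 n1.+1 N =
  \sum_(i < m1) ((-1) ^+ i * cb R n1.+1 i *
       (ps (m1.+1 - i) N * ps (n1.+1 + i) N - (ps (m1.+1 - i) N * ps (n1.+1 + i) N - tri (m1.+1 - i) (n1.+1 + i) N)))
  + (-1) ^+ m1.+1 * (\sum_(j < n1) (cb R m1.+1 j *
       (ps (m1.+1 + j) N * ps (n1.+1 - j) N - zss (n1.+1 - j) (m1.+1 + j) N))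
     + cb R m1.+1 n1 * ((ps 1 N * ps (m1.+1 + n1) N - tri 1 (m1.+1 + n1) N) - zss 1 (m1.+1 + n1) N)).
Proof.
move=> hm hn.
rewrite fin_ident // big_ord_recr /= [\sum_(j < n1.+1) _]big_ord_recr /=.
have ec : cb R n1.+1 m1 = cb R m1.+1 n1.
  by rewrite /cb; congr (_%:R); rewrite -bin_sub; [congr binomial; lia | lia].
have eq : (n1.+1 + m1 = m1.+1 + n1)%N by lia.
rewrite ec eq !subSnn.
have ez : z2s (R:=R) (m1.+1 + n1) 1 N = ps (m1.+1 + n1) N * ps 1 N - zss 1 (m1.+1 + n1) N.
  by rewrite -square_ident; ring.
rewrite ez.
have -> : \sum_(i < m1) (-1) ^+ i * cb R n1.+1 i * tri (m1.+1 - i) (n1.+1 + i) N =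
  \sum_(i < m1) ((-1) ^+ i * cb R n1.+1 i *
       (ps (m1.+1 - i) N * ps (n1.+1 + i) N - (ps (m1.+1 - i) N * ps (n1.+1 + i) N - tri (m1.+1 - i) (n1.+1 + i) N))).
  by apply: eq_bigr => i _; ring.
have -> : \sum_(j < n1) cb R m1.+1 j * z2s (m1.+1 + j) (n1.+1 - j) N =
  \sum_(j < n1) (cb R m1.+1 j *
       (ps (m1.+1 + j) N * ps (n1.+1 - j) N - zss (n1.+1 - j) (m1.+1 + j) N)).
  by apply: eq_bigr => j _; rewrite -square_ident; ring.
rewrite exprS; ring.
Qed.


Lemma cvg_zeta {R : realType} a : (2 <= a)%N -> (ps (R:=R) a @ \oo --> zeta R a)%classic.
Proof. move=> h; exact: cvg_ps. Qed.

Lemma cvg_zstar {R : realType} b a :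
  (2 <= b)%N && (2 <= a)%N || (b == 1%N) && (3 <= a)%N ->
  (zss (R:=R) b a @ \oo --> zeta2_star R b a)%classic.
Proof. move=> h; exact: cvg_zss. Qed.

Lemma zeta2_val {R : realType} m1 n1 : (0 < m1)%N -> (0 < n1)%N ->
  zeta2 R m1.+1 n1.+1 =
  \sum_(i < m1) ((-1) ^+ i * cb R n1.+1 i * (zeta R (m1.+1 - i) * zeta R (n1.+1 + i) - 0))
  + (-1) ^+ m1.+1 * (\sum_(j < n1) (cb R m1.+1 j *
       (zeta R (m1.+1 + j) * zeta R (n1.+1 - j) - zeta2_star R (n1.+1 - j) (m1.+1 + j)))
     + cb R m1.+1 n1 * (0 - zeta2_star R 1 (m1.+1 + n1))).
Proof.
move=> hm hn.
have L : (z2s (R:=R) m1.+1 n1.+1 @ \oo --> 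
  \sum_(i < m1) ((-1) ^+ i * cb R n1.+1 i * (zeta R (m1.+1 - i) * zeta R (n1.+1 + i) - 0))
  + (-1) ^+ m1.+1 * (\sum_(j < n1) (cb R m1.+1 j *
       (zeta R (m1.+1 + j) * zeta R (n1.+1 - j) - zeta2_star R (n1.+1 - j) (m1.+1 + j)))
     + cb R m1.+1 n1 * (0 - zeta2_star R 1 (m1.+1 + n1))))%classic.
  have -> : z2s (R:=R) m1.+1 n1.+1 = fun N => 
    \sum_(i < m1) ((-1) ^+ i * cb R n1.+1 i *
       (ps (m1.+1 - i) N * ps (n1.+1 + i) N - (ps (m1.+1 - i) N * ps (n1.+1 + i) N - tri (m1.+1 - i) (n1.+1 + i) N)))
    + (-1) ^+ m1.+1 * (\sum_(j < n1) (cb R m1.+1 j *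
       (ps (m1.+1 + j) N * ps (n1.+1 - j) N - zss (n1.+1 - j) (m1.+1 + j) N))
     + cb R m1.+1 n1 * ((ps 1 N * ps (m1.+1 + n1) N - tri 1 (m1.+1 + n1) N) - zss 1 (m1.+1 + n1) N)).
    by apply: funext => N; exact: seq_ident.
  apply: cvgD.
    apply: cvg_sum_ord => i; have hi := ltn_ord i; apply: cvgMl_tmp; apply: cvgB.
      by apply: cvgM; apply: cvg_zeta; lia.
    by apply: cvg_err; lia.
  apply: cvgMl_tmp; apply: cvgD.
    apply: cvg_sum_ord => j; have hj := ltn_ord j; apply: cvgMl_tmp; apply: cvgB.
      by apply: cvgM; apply: cvg_zeta; lia.
    by apply: cvg_zstar; apply/orP; left; apply/andP; split; lia.
  apply: cvgMl_tmp; apply: cvgB.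
    by apply: cvg_err; lia.
  by apply: cvg_zstar; apply/orP; right; apply/andP; split; lia.
exact: (norm_cvg_lim L).
Qed.


Theorem theorem2p3 (R : realType) (m n : nat) (hm : (1 < m)%N) (hn : (1 < n)%N) :
  (zeta2 R m n)%:P =
    \sum_(0 <= i < m)
       (((-1) ^+ i * ('C(n + i - 1, i))%:R * zeta R (n + i)) *: zeta_sh R (m - i))
    + (-1) ^+ m *:
       \sum_(0 <= j < n)
         (('C(m + j - 1, j))%:R *:
            (zeta R (m + j) *: zeta_sh R (n - j) - (zeta2_star R (n - j) (m + j))%:P)).
Proof.
case: m hm => [//|m1] hm; case: n hn => [//|n1] hn.
have hm1 : (0 < m1)%N by lia.
have hn1 : (0 < n1)%N by lia.
rewrite (zeta2_val m1 n1 hm1 hn1).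
rewrite !big_mkord big_ord_recr /= [\sum_(j < n1.+1) _]big_ord_recr /= !subSnn.
have E1 : \sum_(i < m1)
     ((-1) ^+ i * 'C(n1.+1 + i - 1, i)%:R * zeta R (n1.+1 + i)) *: zeta_sh R (m1.+1 - i)
  = (\sum_(i < m1) ((-1) ^+ i * cb R n1.+1 i * (zeta R (m1.+1 - i) * zeta R (n1.+1 + i) - 0)))%:P.
  rewrite rmorph_sum; apply: eq_bigr => i _.
  have hi := ltn_ord i.
  rewrite /zeta_sh ifF; last by apply/eqP; lia.
  by rewrite scale_polyC /cb; congr polyC; ring.
have E2 : \sum_(i < n1)
      'C(m1.+1 + i - 1, i)%:R *:
      (zeta R (m1.+1 + i) *: zeta_sh R (n1.+1 - i) -
       (zeta2_star R (n1.+1 - i) (m1.+1 + i))%:P)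
  = (\sum_(j < n1) (cb R m1.+1 j *
       (zeta R (m1.+1 + j) * zeta R (n1.+1 - j) - zeta2_star R (n1.+1 - j) (m1.+1 + j))))%:P.
  rewrite rmorph_sum; apply: eq_bigr => i _.
  have hi := ltn_ord i.
  rewrite /zeta_sh ifF; last by apply/eqP; lia.
  by rewrite scale_polyC -rmorphB scale_polyC.
rewrite E1 E2 /zeta_sh eqxx.
have ec : 'C(n1.+1 + m1 - 1, m1) = 'C(m1.+1 + n1 - 1, n1).
  by rewrite -bin_sub; [congr binomial; lia | lia].
have eq : (n1.+1 + m1 = m1.+1 + n1)%N by lia.
rewrite ec eq -/(cb R m1.+1 n1).
rewrite -!mul_polyC.
rewrite !(rmorphD, rmorphB, rmorphM, rmorph0, rmorphXn, rmorphN1, rmorphN).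
rewrite exprS.
ring.
Qed.
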